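(* Let $\tau$ be an infinite cardinal and let $(G,X,\alpha)$ be a $G$-space with transitive action $\alpha$ and $\chi(X)\le\tau$. If $G$ is $\tau$-narrow (respectively $\tau$-balanced), then there exists a topological group $H$ with $w(H)\le\tau$ (respectively $\chi(H)\le\tau$) which admits a continuous transitive action on $X$.
   Context: All spaces are Tychonoff. A $G$-space $(G,X,\alpha)$ is a topological group $G$ with a continuous action $\alpha:G\times X\to X$; transitive means $Gx=X$ for $x\in X$. A topological group $G$ is $\tau$-narrow if for every neighborhood $U$ of the unit there is $A\subset G$ with $|A|\le\tau$ and $AU=G$. $G$ is $\tau$-balanced if for every neighborhood $U$ of the unit there is a family $\gamma$ of neighborhoods of the unit with $|\gamma|\le\tau$ such that for every $x\in G$ some $V\in\gamma$ satisfies $xVx^{-1}\subset U$. *)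

(* Defs.v *)
From HB Require Import structures.
From mathcomp Require Import all_boot all_order all_algebra.
From mathcomp Require Import all_classical all_reals topology.
From mathcomp Require Import Rstruct Rstruct_topology.
From Stdlib Require Import Reals.

Set Implicit Arguments.
Unset Strict Implicit.
Unset Printing Implicit Defensive.

Local Open Scope classical_set_scope.

Definition completely_regular (T : topologicalType) : Prop :=
  forall (F : set T) (x : T), closed F -> ~ F x ->
    exists f : T -> Rdefinitions.R, continuous f /\ f x = 0%R /\
      (forall y, F y -> f y = 1%R).

Definition tychonoff_space (T : topologicalType) : Prop :=
  hausdorff_space T /\ completely_regular T.

Definition is_topgroup (G : topologicalType) (mul : G -> G -> G)
    (inv : G -> G) (one : G) : Prop :=
  [/\ (forall a b c, mul a (mul b c) = mul (mul a b) c),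
      (forall a, mul one a = a /\ mul a one = a),
      (forall a, mul (inv a) a = one /\ mul a (inv a) = one),
      continuous (fun p : G * G => mul p.1 p.2) &
      continuous inv].

Definition is_continuous_action (G X : topologicalType) (mul : G -> G -> G)
    (one : G) (alpha : G -> X -> X) : Prop :=
  [/\ continuous (fun p : G * X => alpha p.1 p.2),
      (forall x, alpha one x = x) &
      (forall g h x, alpha (mul g h) x = alpha g (alpha h x))].

Definition transitive_action (G X : Type) (alpha : G -> X -> X) : Prop :=
  forall x y : X, exists g : G, alpha g x = y.

(* Cardinals: an infinite cardinal tau is represented by a type K with
   infinite_set [set: K]; "|A| <= tau" is  (A #<= [set: K])%card. *)

Definition character_le (X : topologicalType) (K : Type) : Prop :=
  forall x : X, exists B : set (set X),
    (B #<= [set: K])%card /\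
    (forall b, B b -> open b /\ b x) /\
    (forall W, nbhs x W -> exists2 b, B b & b `<=` W).

Definition weight_le (X : topologicalType) (K : Type) : Prop :=
  exists B : set (set X),
    (B #<= [set: K])%card /\
    (forall b, B b -> open b) /\
    (forall (W : set X) (x : X), open W -> W x ->
       exists2 b, B b & b x /\ b `<=` W).

Definition narrow (G : topologicalType) (mul : G -> G -> G) (one : G)
    (K : Type) : Prop :=
  forall U : set G, nbhs one U ->
    exists A : set G, (A #<= [set: K])%card /\
      (forall g, exists a u, A a /\ U u /\ g = mul a u).

Definition balanced (G : topologicalType) (mul : G -> G -> G)
    (inv : G -> G) (one : G) (K : Type) : Prop :=
  forall U : set G, nbhs one U ->
    exists gamma : set (set G), (gamma #<= [set: K])%card /\
      (forall V, gamma V -> nbhs one V) /\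
      (forall x : G, exists2 V, gamma V &
         forall v, V v -> U (mul (mul x v) (inv x))).

(* existence of a topological group H with property P admitting a
   continuous transitive action on X (H Tychonoff, per the paper's
   standing convention) *)
Definition acts_transitively_via (X : topologicalType)
    (P : forall H : topologicalType, (H -> H -> H) -> (H -> H) -> H -> Prop)
    : Prop :=
  exists (H : topologicalType) (mul : H -> H -> H) (inv : H -> H) (one : H)
         (beta : H -> X -> X),
    [/\ tychonoff_space H, is_topgroup mul inv one, P H mul inv one,
        is_continuous_action mul one beta & transitive_action beta].

(* Main.v *)
Require Import Defs.
From HB Require Import structures.
From mathcomp Require Import all_boot all_order all_algebra.
From mathcomp Require Import all_classical all_reals topology.
From mathcomp Require Import Rstruct Rstruct_topology normedtype.
Set Implicit Arguments. Unset Strict Implicit. Unset Printing Implicit Defensive.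
Local Open Scope classical_set_scope.
Lemma inj_nat_of_inf (K : Type) : infinite_set [set: K] -> exists e : nat -> K, injective e.
Proof.
move=> /infiniteP /card_leP [f].
exists (fun n => val (f (SigSub (mem_set (I : [set: nat] n))))) => m n /val_inj.
move=> /(@inj _ _ _ f); rewrite !inE => /(_ I I) [].
by [].
Qed.

Lemma iff_of (P Q : Prop) : (P /\ Q) \/ (~ P /\ ~ Q) -> (P <-> Q).
Proof. by case=> -[p q]; split. Qed.

Lemma pchoice (X Y : Type) (d : X -> Y) (P : X -> Y -> Prop) :
  exists h : X -> Y, forall x, (exists y, P x y) -> P x (h x).
Proof.
have : forall x, exists y, (exists y, P x y) -> P x y.
  move=> x; case: (pselect (exists y, P x y)) => [[y Py]|N]; first by exists y.
  by exists (d x).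
by case/choice => h Hh; exists h.
Qed.

Lemma comparable_sets (K : Type) (A C : set K) :
  (exists h : K -> K, {in A &, injective h} /\ (forall x, A x -> C (h x))) \/
  (exists h : K -> K, {in C &, injective h} /\ (forall x, C x -> A (h x))).
Proof.
pose P (R : set (K * K)) := [/\ forall p, R p -> A p.1 /\ C p.2,
  (forall x y y', R (x, y) -> R (x, y') -> y = y') &
  (forall x x' y, R (x, y) -> R (x', y) -> x = x')].
have [R [[RAC Rf Ri] Rmax]] : exists R, P R /\ forall B, R `<` B -> ~ P B.
  apply: Zorn_bigcup => F FP Ftot; rewrite /P in FP *. split.
  - move=> p [R FR Rp]; have [H1 _ _] := FP _ FR. exact: H1.
  - move=> x y y' [R1 FR1 R1x] [R2 FR2 R2x].
    case: (Ftot _ _ FR1 FR2) => S.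
      by have [_ H2 _] := FP _ FR2; exact: (H2 x y y' (S _ R1x) R2x).
    by have [_ H2 _] := FP _ FR1; exact: (H2 x y y' R1x (S _ R2x)).
  - move=> x x' y [R1 FR1 R1x] [R2 FR2 R2x].
    case: (Ftot _ _ FR1 FR2) => S.
      by have [_ _ H2] := FP _ FR2; exact: (H2 x x' y (S _ R1x) R2x).
    by have [_ _ H2] := FP _ FR1; exact: (H2 x x' y R1x (S _ R2x)).
case: (pselect (forall x, A x -> exists y, R (x, y))) => [domA|ndomA].
  left; have [h Hh] := pchoice (fun x => x) (fun x y => R (x, y)).
  exists h; split.
    move=> x x' /set_mem Ax /set_mem Ax' hxx'.
    apply: (Ri _ _ (h x)); first exact: Hh (domA _ Ax).
    by rewrite hxx'; exact: Hh (domA _ Ax').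
  by move=> x Ax; exact: (RAC _ (Hh _ (domA _ Ax))).2.
case: (pselect (forall y, C y -> exists x, R (x, y))) => [ranC|nranC].
  right; have [h Hh] := pchoice (fun x => x) (fun y x => R (x, y)).
  exists h; split.
    move=> x x' /set_mem Ax /set_mem Ax' hxx'.
    apply: (Rf (h x)); first exact: Hh (ranC _ Ax).
    by rewrite hxx'; exact: Hh (ranC _ Ax').
  by move=> x Ax; exact: (RAC _ (Hh _ (ranC _ Ax))).1.
exfalso.
have [a [Aa na]] : exists a, A a /\ ~ exists y, R (a, y).
  apply: contrapT => N; apply: ndomA => x Ax; apply: contrapT => nx.
  by apply: N; exists x.
have [c [Cc nc]] : exists c, C c /\ ~ exists x, R (x, c).
  apply: contrapT => N; apply: nranC => x Ax; apply: contrapT => nx.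
  by apply: N; exists x.
apply: (Rmax (R `|` [set (a, c)])).
  split; first by move=> p Rp; left.
  move=> /(_ (a, c)) /(_ (or_intror erefl)) Rac.
  by apply: na; exists c.
split.
- by move=> p [/RAC//|-> /=].
- move=> x y y' [Rxy|[ex ey]] [Rxy'|[ex' ey']]; subst.
  + exact: (Rf x).
  + by exfalso; apply: na; exists y.
  + by exfalso; apply: na; exists y'.
  + by [].
- move=> x x' y [Rxy|[ex ey]] [Rxy'|[ex' ey']]; subst.
  + exact: (Ri _ _ y).
  + by exfalso; apply: nc; exists x.
  + by exfalso; apply: nc; exists x'.
  + by [].
Qed.

Definition dom3 (K : Type) (S : set ((K * K) * K)) := [set x | exists y z, S ((x, y), z)].

Definition Q3 (K : Type) (S : set ((K * K) * K)) := [/\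
  (forall p z z', S (p, z) -> S (p, z') -> z = z'),
  (forall p p' z, S (p, z) -> S (p', z) -> p = p'),
  (forall x y, dom3 S x -> dom3 S y -> exists z, S ((x, y), z)),
  (forall x y z, S ((x, y), z) -> dom3 S y) &
  (forall p z, S (p, z) -> dom3 S z)].

Lemma dom3S (K : Type) (S S' : set ((K * K) * K)) : S `<=` S' -> dom3 S `<=` dom3 S'.
Proof. by move=> SS x [y [z Sxyz]]; exists y, z; apply: SS. Qed.

Lemma KxK_inj (K : Type) : infinite_set [set: K] -> exists g : K * K -> K, injective g.
Proof.
move=> /inj_nat_of_inf [e einj].
have pinj : injective (@pickle (nat * nat)%type) by exact: (pcan_inj (@pickleK _)).
pose S0 := [set q : (K * K) * K | exists m n, q = ((e m, e n), e (pickle (m, n)))].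
have domS0 n : dom3 S0 (e n) by exists (e 0), (e (pickle (n, 0))); exists n, 0.
have domS0' x : dom3 S0 x -> exists n, x = e n.
  by case=> y [z [m [n [-> _ _]]]]; exists m.
have QS0 : Q3 S0.
  split.
  - move=> p z z' [m [n [-> ->]]] [m' [n' [/einj -> /einj -> ->]]].
    by [].
  - move=> p p' z [m [n [-> ->]]] [m' [n' [-> /einj/pinj [-> ->]]]].
    by [].
  - move=> x y /domS0' [m ->] /domS0' [n ->]; exists (e (pickle (m, n))).
    by exists m, n.
  - by move=> x y z [m [n [_ -> _]]]; exact: domS0.
  - by move=> p z [m [n [_ ->]]]; exact: domS0.
pose P S := Q3 S /\ (S = set0 \/ S0 `<=` S).
have [S [[[Sf Si St Sd Sr] S0S] Smax]] : exists S, P S /\ forall B, S `<` B -> ~ P B.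
  apply: Zorn_bigcup => F FP Ftot; rewrite /P /Q3 in FP *.
  have big2 S1 S2 : F S1 -> F S2 -> exists S, [/\ F S, S1 `<=` S & S2 `<=` S].
    move=> FS1 FS2; case: (Ftot _ _ FS1 FS2) => sub.
      by exists S2; split.
    by exists S1; split.
  split; first split.
  - move=> p z z' [S1 FS1 S1p] [S2 FS2 S2p].
    have [S [FS s1 s2]] := big2 _ _ FS1 FS2.
    have [[H _ _ _ _] _] := FP _ FS; exact: (H p z z' (s1 _ S1p) (s2 _ S2p)).
  - move=> p p' z [S1 FS1 S1p] [S2 FS2 S2p].
    have [S [FS s1 s2]] := big2 _ _ FS1 FS2.
    have [[_ H _ _ _] _] := FP _ FS; exact: (H p p' z (s1 _ S1p) (s2 _ S2p)).
  - move=> x y [y1 [z1 [S1 FS1 S1p]]] [y2 [z2 [S2 FS2 S2p]]].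
    have [S [FS s1 s2]] := big2 _ _ FS1 FS2.
    have [[_ _ + _ _] _] := FP _ FS.
    case/(_ x y); [by exists y1, z1; apply: s1 | by exists y2, z2; apply: s2 |].
    by move=> z Sz; exists z; exists S.
  - move=> x y z [S1 FS1 S1p]; have [[_ _ _ + _] _] := FP _ FS1.
    by move=> /(_ _ _ _ S1p); apply: dom3S => q Sq; exists S1.
  - move=> p z [S1 FS1 S1p]; have [[_ _ _ _ +] _] := FP _ FS1.
    by move=> /(_ _ _ S1p); apply: dom3S => q Sq; exists S1.
  case: (pselect (exists2 S, F S & S0 `<=` S)) => [[S FS S0S]|N].
    by right => q S0q; exists S => //; apply: S0S.
  left; apply/seteqP; split => // q [S FS Sq].
  have [_ [S0'|S0S]] := FP _ FS; first by rewrite S0' in Sq.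
  by exfalso; apply: N; exists S.
have S0S1 : S0 `<=` S.
  case: S0S => // S0' ; exfalso; apply: (Smax S0); last by split => //; right.
  rewrite S0'; split => //; move=> /(_ ((e 0, e 0), e (pickle (0, 0)))) H.
  by have := H (ex_intro _ 0 (ex_intro _ 0 erefl)).
pose A := dom3 S.
have eA n : A (e n) by exact: (dom3S S0S1 (domS0 n)).
have [f Hf] := pchoice (fun p : K * K => p.1) (fun p z => S (p, z)).
have fS x y : A x -> A y -> S ((x, y), f (x, y)).
  by move=> Ax Ay; apply: Hf; apply: St.
have fA x y : A x -> A y -> A (f (x, y)).
  by move=> Ax Ay; exact: Sr _ _ (fS _ _ Ax Ay).
have finj x y x' y' : A x -> A y -> A x' -> A y' -> f (x, y) = f (x', y') ->
    x = x' /\ y = y'.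
  move=> Ax Ay Ax' Ay' E.
  have := Si _ _ _ (fS _ _ Ax Ay); rewrite E => /(_ _ (fS _ _ Ax' Ay')).
  by case=> -> ->.
have t01 : e 0 <> e 1 by move/einj.
have t02 : e 0 <> e 2 by move/einj.
have t12 : e 1 <> e 2 by move/einj.
case: (comparable_sets A (~` A)) => [[h [hinj hC]]|[h [hinj hA]]]; last first.
  pose phi x := if pselect (A x) is left _ then f (x, e 0) else f (h x, e 1).
  have phiA x : A (phi x).
    by rewrite /phi; case: pselect => Ax; apply: (fA) => //; apply: (hA).
  have phiinj : injective phi.
    move=> x x'; rewrite /phi; case: pselect => Ax; case: pselect => Ax' E.
    - by case: (finj _ _ _ _ Ax (eA 0) Ax' (eA 0) E).
    - by case: (finj _ _ _ _ Ax (eA 0) (hA _ Ax') (eA 1) E).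
    - by case: (finj _ _ _ _ (hA _ Ax) (eA 1) Ax' (eA 0) E) => _ /esym.
    - case: (finj _ _ _ _ (hA _ Ax) (eA 1) (hA _ Ax') (eA 1) E) => E' _.
      by apply: hinj => //; rewrite inE.
  exists (fun p => f (phi p.1, phi p.2)) => -[x y] [x' y'] /=.
  by move/(finj _ _ _ _ (phiA _) (phiA _) (phiA _) (phiA _)) => [/phiinj -> /phiinj ->].
exfalso.
pose B := h @` A.
have BnA b : B b -> ~ A b by case=> a Aa <-; apply: hC.
have hB a : A a -> B (h a) by exists a.
have [hinv Hhinv] := pchoice id (fun b a => A a /\ h a = b).
have hinvP b : B b -> A (hinv b) /\ h (hinv b) = b.
  by move=> Bb; apply: Hhinv; case: Bb => a Aa <-; exists a.
pose AB := A `|` B.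
pose cf x := if pselect (A x) is left _ then x else hinv x.
have cfA x : AB x -> A (cf x).
  by rewrite /cf; case: pselect => // Ax [//|/hinvP[]].
have cfinj x x' : AB x -> AB x' -> (A x <-> A x') -> cf x = cf x' -> x = x'.
  rewrite /cf => ABx ABx' [AA AA']; case: pselect => Ax; case: pselect => Ax' //.
  - by exfalso; apply: Ax'; apply: AA.
  - by exfalso; apply: Ax; apply: AA'.
  - move=> E; case: ABx => // Bx; case: ABx' => // Bx'.
    by rewrite -(hinvP _ Bx).2 -(hinvP _ Bx').2 E.
have cfinjA x x' : A x -> A x' -> cf x = cf x' -> x = x'.
  by rewrite /cf => Ax Ax'; case: pselect => // _; case: pselect.
have cfinjB x x' : B x -> B x' -> cf x = cf x' -> x = x'.
  rewrite /cf => Bx Bx'; case: pselect => [/(BnA _ Bx)//|_]; case: pselect => [/(BnA _ Bx')//|_].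
  by move=> E; rewrite -(hinvP _ Bx).2 -(hinvP _ Bx').2 E.
have nAB x : AB x -> ~ A x -> B x by case.
pose ct (p : K * K) := if pselect (A p.1) is left _ then e 0
  else if pselect (A p.2) is left _ then e 1 else e 2.
pose code (p : K * K) := h (f (f (cf p.1, cf p.2), ct p)).
have ctA p : A (ct p) by rewrite /ct; case: pselect => _; [|case: pselect => _].
have codeB p : AB p.1 -> AB p.2 -> B (code p).
  by move=> ? ?; apply: hB; apply: (fA) => //; apply: (fA); apply: (cfA).
have codeinj p p' : AB p.1 -> AB p.2 -> ~ (A p.1 /\ A p.2) ->
    AB p'.1 -> AB p'.2 -> ~ (A p'.1 /\ A p'.2) -> code p = code p' -> p = p'.
  case: p => x y; case: p' => x' y' /= ABx ABy nA ABx' ABy' nA' E.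
  have Eo := hinj _ _ (mem_set (fA _ _ (fA _ _ (cfA _ ABx) (cfA _ ABy)) (ctA _)))
    (mem_set (fA _ _ (fA _ _ (cfA _ ABx') (cfA _ ABy')) (ctA _))) E.
  have [E1 Ect] := finj _ _ _ _ (fA _ _ (cfA _ ABx) (cfA _ ABy)) (ctA _)
    (fA _ _ (cfA _ ABx') (cfA _ ABy')) (ctA _) Eo.
  have [Ex Ey] := finj _ _ _ _ (cfA _ ABx) (cfA _ ABy) (cfA _ ABx') (cfA _ ABy') E1.
  move: Ect; rewrite /ct /=.
  case: (pselect (A x)) => Ax; case: (pselect (A x')) => Ax';
  case: (pselect (A y)) => Ay; case: (pselect (A y')) => Ay' //=;
  try by [move/einj | exfalso; apply: nA | exfalso; apply: nA'].
  - move=> _; rewrite (cfinjA _ _ Ax Ax' Ex) (cfinjB _ _ (nAB _ ABy Ay) (nAB _ ABy' Ay') Ey) //.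
  - move=> _; rewrite (cfinjB _ _ (nAB _ ABx Ax) (nAB _ ABx' Ax') Ex) (cfinjA _ _ Ay Ay' Ey) //.
  - move=> _; rewrite (cfinjB _ _ (nAB _ ABx Ax) (nAB _ ABx' Ax') Ex) (cfinjB _ _ (nAB _ ABy Ay) (nAB _ ABy' Ay') Ey) //.
have SA x y z : S ((x, y), z) -> A x /\ A y.
  by move=> Sxyz; split; [exists y, z | exact: Sd Sxyz].
pose ext := [set q : (K * K) * K |
  [/\ AB q.1.1, AB q.1.2, ~ (A q.1.1 /\ A q.1.2) & q.2 = code q.1]].
pose S' := S `|` ext.
have domS' x : dom3 S' x -> AB x.
  by case=> y [z [/SA [Ax _]|[ABx _ _ _]]]; [left | ].
have domS'2 x : AB x -> dom3 S' x.
  case=> [Ax|Bx].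
  - by exists x, (f (x, x)); left; exact: fS.
  - by exists x, (code (x, x)); right; split; [right|right|case=> /(BnA _ Bx)|].
apply: (Smax S').
  split; first by move=> q Sq; left.
  move=> /(_ ((h (e 0), h (e 0)), code (h (e 0), h (e 0)))) H.
  have : S' ((h (e 0), h (e 0)), code (h (e 0), h (e 0))).
    by right; split; [right; exact: hB (eA 0) | right; exact: hB (eA 0) | case=> + _; exact: hC (eA 0) | ].
  by move/H => /SA [] /(hC _ (eA 0)).
split; last by right => q /S0S1 Sq; left.
split.
- move=> [x y] z z' [Sz|[ABx ABy nA Ez]] [Sz'|[ABx' ABy' nA' Ez']].
  + exact: Sf Sz Sz'.
  + by exfalso; apply: nA'; exact: SA Sz.
  + by exfalso; apply: nA; exact: SA Sz'.
  + by move: Ez Ez' => /= -> ->.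
- move=> p p' z [Sz|[ABx ABy nA Ez]] [Sz'|[ABx' ABy' nA' Ez']].
  + exact: Si Sz Sz'.
  + by exfalso; apply: (BnA z); [move: Ez' => /= ->; exact: codeB | exact: Sr Sz].
  + by exfalso; apply: (BnA z); [move: Ez => /= ->; exact: codeB | exact: Sr Sz'].
  + by apply: codeinj => //; move: Ez Ez' => /= <- <-.
- move=> x y /domS' ABx /domS' ABy.
  case: (pselect (A x /\ A y)) => [[Ax Ay]|nA].
    by exists (f (x, y)); left; exact: fS.
  by exists (code (x, y)); right; split.
- by move=> x y z [/SA [_ Ay]|[_ ABy _ _]]; apply: (domS'2) => //; left.
- move=> p z [Sz|[ABx ABy _ /= ->]]; apply: (domS'2); first by left; exact: Sr Sz.
  by right; exact: codeB.
Qed.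


Definition small (K T : Type) (A : set T) := exists f : K -> T, A `<=` range f.

Section Small.
Variable K : Type.
Hypothesis Kinf : infinite_set [set: K].

Lemma K_inh : exists k : K, True.
Proof. by have [e _] := inj_nat_of_inf Kinf; exists (e 0). Qed.

Lemma card_small T (t0 : T) (A : set T) : (A #<= [set: K])%card -> small K A.
Proof.
case/pfcard_geP => [->|/surjfunPex [f ->]]; first by exists (fun _ => t0).
by exists f => _ [k _ <-]; exists k.
Qed.

Lemma small_card T (A : set T) : small K A -> (A #<= [set: K])%card.
Proof.
case=> f Af; apply/pfcard_geP.
case: (pselect (exists a, A a)) => [[a0 Aa0]|N]; last first.
  by left; apply/seteqP; split => // a Aa; apply: N; exists a.
right; apply/surjfunPex.
exists (fun k => if pselect (A (f k)) is left _ then f k else a0).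
apply/seteqP; split.
  move=> a Aa; case: (Af _ Aa) => k _ fk; exists k => //.
  by case: pselect => //; rewrite fk.
by move=> _ [k _ <-]; case: pselect.
Qed.

Lemma small_sub T (A B : set T) : A `<=` B -> small K B -> small K A.
Proof. by move=> AB [f Bf]; exists f => a /AB /Bf. Qed.

Lemma small_image T U (g : T -> U) (A : set T) : small K A -> small K (g @` A).
Proof.
by case=> f Af; exists (g \o f) => _ [a /Af [k _ <-] <-]; exists k.
Qed.

Lemma small_set1 T (t : T) : small K [set t].
Proof. by have [k0 _] := K_inh; exists (fun _ => t) => _ ->; exists k0. Qed.

Lemma small_union T I (t0 : T) (D : set I) (F : I -> set T) :
  small K D -> (forall i, D i -> small K (F i)) -> small K (\bigcup_(i in D) F i).
Proof.
move=> [fD HD] HF.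
have [p pinj] := KxK_inj Kinf.
have [k0 _] := K_inh.
have [unp Hunp] := pchoice (fun _ => (k0, k0)) (fun k q => p q = k).
have unpK q : unp (p q) = q by apply: pinj; apply: Hunp; exists q.
have [fam Hfam] := pchoice (fun _ _ => t0) (fun i (g : K -> T) => D i -> F i `<=` range g).
exists (fun k => fam (fD (unp k).1) (unp k).2) => t [i Di Fit].
case: (HD _ Di) => a _ fDa.
have [g Hg] := HF _ Di.
have := Hfam i (ex_intro _ g (fun _ => Hg)) Di _ Fit; case=> b _ famb.
by exists (p (a, b)) => //; rewrite unpK /= fDa.
Qed.

Lemma small_nat_union T (t0 : T) (F : nat -> set T) :
  (forall n, small K (F n)) -> small K (\bigcup_n F n).
Proof.
move=> HF; have [e einj] := inj_nat_of_inf Kinf.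
have [un Hun] := pchoice (fun _ => 0) (fun k n => e n = k).
have sN : small K [set: nat].
  by exists un => n _; exists (e n) => //; apply: einj; apply: Hun; exists n.
have := small_union t0 sN (fun n _ => HF n).
by apply: small_sub => t [n _ Ft]; exists n.
Qed.

Lemma small_setU T (t0 : T) (A B : set T) : small K A -> small K B -> small K (A `|` B).
Proof.
move=> sA sB.
apply: (@small_sub _ _ (\bigcup_n (if n is 0 then A else B))).
  by move=> t [At|Bt]; [exists 0 | exists 1].
by apply: (small_nat_union t0) => -[|n].
Qed.

End Small.


Section GroupAlg.
Variables (T : Type) (mul : T -> T -> T) (inv : T -> T) (one : T).
Hypothesis mulA : forall a b c, mul a (mul b c) = mul (mul a b) c.
Hypothesis mul1 : forall a, mul one a = a /\ mul a one = a.
Hypothesis mulV : forall a, mul (inv a) a = one /\ mul a (inv a) = one.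

Lemma g_mul1l a : mul one a = a. Proof. by case: (mul1 a). Qed.
Lemma g_mul1r a : mul a one = a. Proof. by case: (mul1 a). Qed.
Lemma g_mulVl a : mul (inv a) a = one. Proof. by case: (mulV a). Qed.
Lemma g_mulVr a : mul a (inv a) = one. Proof. by case: (mulV a). Qed.
Lemma g_mulKl a b : mul (inv a) (mul a b) = b.
Proof. by rewrite mulA g_mulVl g_mul1l. Qed.
Lemma g_mulKr a b : mul a (mul (inv a) b) = b.
Proof. by rewrite mulA g_mulVr g_mul1l. Qed.
Lemma g_mulKl' a b : mul (mul b a) (inv a) = b.
Proof. by rewrite -mulA g_mulVr g_mul1r. Qed.
Lemma g_mulKr' a b : mul (mul b (inv a)) a = b.
Proof. by rewrite -mulA g_mulVl g_mul1r. Qed.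
Lemma g_mul_canl a b c : mul a b = mul a c -> b = c.
Proof. by move=> E; rewrite -(g_mulKl a b) E g_mulKl. Qed.
Lemma g_mul_canr a b c : mul b a = mul c a -> b = c.
Proof. by move=> E; rewrite -(g_mulKl' a b) E g_mulKl'. Qed.
Lemma g_invK a : inv (inv a) = a.
Proof. by apply: (@g_mul_canl (inv a)); rewrite g_mulVr g_mulVl. Qed.
Lemma g_invM a b : inv (mul a b) = mul (inv b) (inv a).
Proof.
apply: (@g_mul_canl (mul a b)); rewrite g_mulVr -mulA (mulA b) g_mulVr g_mul1l.
by rewrite g_mulVr.
Qed.
Lemma g_inv1 : inv one = one.
Proof. by rewrite -{2}(g_mulVl one) g_mul1r. Qed.
Lemma g_inv_inj a b : inv a = inv b -> a = b.
Proof. by move=> E; rewrite -(g_invK a) E g_invK. Qed.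
End GroupAlg.

Lemma cont_nbhs (T U : topologicalType) (f : T -> U) x W :
  continuous f -> nbhs (f x) W -> nbhs x (f @^-1` W).
Proof. by move=> cf nW; apply: cf. Qed.

Lemma nbhs_pair (T U : topologicalType) (a : T) (b : U) (W : set (T * U)) :
  nbhs (a, b) W -> exists A B, [/\ nbhs a A, nbhs b B &
    forall x y, A x -> B y -> W (x, y)].
Proof.
case=> -[A B] /= [nA nB] sub; exists A, B; split => // x y Ax By.
by apply: sub.
Qed.

Section GTop.
Variables (G : topologicalType) (mul : G -> G -> G) (inv : G -> G) (one : G).
Hypothesis tg : is_topgroup mul inv one.

Let mulA : forall a b c, mul a (mul b c) = mul (mul a b) c.
Proof. by case: tg. Qed.
Let mul1 : forall a, mul one a = a /\ mul a one = a.
Proof. by case: tg. Qed.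
Let mulV : forall a, mul (inv a) a = one /\ mul a (inv a) = one.
Proof. by case: tg. Qed.
Let cmul : continuous (fun p : G * G => mul p.1 p.2).
Proof. by case: tg. Qed.
Let cinv : continuous inv.
Proof. by case: tg. Qed.

Lemma nbhs_mul2 a b U : nbhs (mul a b) U -> exists A B, [/\ nbhs a A, nbhs b B &
    forall x y, A x -> B y -> U (mul x y)].
Proof.
move=> nU; have := cont_nbhs (x := (a, b)) cmul nU.
by case/nbhs_pair => A [B [nA nB sub]]; exists A, B; split => // x y Ax By; apply: (sub x y).
Qed.

Lemma nbhs_one_mul U : nbhs one U -> exists2 V, nbhs one V &
  forall a b, V a -> V b -> U (mul a b).
Proof.
rewrite -{1}(g_mul1l mul1 one) => /nbhs_mul2 [A [B [nA nB sub]]].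
exists (A `&` B); first exact: filterI.
by move=> a b [Aa _] [_ Bb]; apply: sub.
Qed.

Lemma nbhs_one_mul3 U : nbhs one U -> exists2 V, nbhs one V &
  forall a b c, V a -> V b -> V c -> U (mul (mul a b) c).
Proof.
move=> /nbhs_one_mul [V1 nV1 s1]; have [V2 nV2 s2] := nbhs_one_mul nV1.
exists (V1 `&` V2); first exact: filterI.
by move=> a b c [_ ?] [_ ?] [? _]; apply: s1 => //; apply: s2.
Qed.

Lemma nbhs_one_inv U : nbhs one U -> nbhs one [set a | U (inv a)].
Proof.
by rewrite -{1}(g_inv1 mul1 mulV) => nU; apply: (cont_nbhs cinv nU).
Qed.

Lemma nbhs_lmul c w U : nbhs (mul c w) U -> nbhs w [set w' | U (mul c w')].
Proof.
case/nbhs_mul2 => A [B [nA nB sub]].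
by apply: filterS nB => w' Bw'; apply: sub => //; apply: nbhs_singleton.
Qed.

Lemma nbhs_rmul c w U : nbhs (mul w c) U -> nbhs w [set w' | U (mul w' c)].
Proof.
case/nbhs_mul2 => A [B [nA nB sub]].
by apply: filterS nA => w' Aw'; apply: sub => //; apply: nbhs_singleton.
Qed.

Lemma nbhs_conj c U : nbhs one U -> nbhs one [set w | U (mul (mul c w) (inv c))].
Proof.
move=> nU.
have : nbhs (mul c one) [set y | U (mul y (inv c))].
  by rewrite (g_mul1r mul1); apply: nbhs_rmul; rewrite (g_mulVr mulV).
by move/nbhs_lmul.
Qed.

Lemma nbhsI (x : G) A B : nbhs x A -> nbhs x B -> nbhs x (A `&` B).
Proof. exact: filterI. Qed.

End GTop.


Lemma cchoice (X Y : Type) (d : X -> Y) (Q : X -> Prop) (R : X -> Y -> Prop) :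
  (forall x, Q x -> exists y, R x y) -> exists f : X -> Y, forall x, Q x -> R x (f x).
Proof.
move=> H; have [f Hf] := pchoice d R; exists f => x Qx; apply: Hf; exact: H.
Qed.

Definition closedF (T : Type) (mul : T -> T -> T) (inv : T -> T) (F : set (set T)) := [/\
  (forall U, F U -> exists2 V, F V & forall a b, V a -> V b -> U (mul a b)),
  (forall U, F U -> exists2 V, F V & forall a, V a -> U (inv a)),
  (forall U x, F U -> exists2 V, F V & forall v, V v -> U (mul (mul x v) (inv x))) &
  (forall U V, F U -> F V -> F (U `&` V))].

Section Closure.
Variables (K : Type) (G : topologicalType) (mul : G -> G -> G) (inv : G -> G) (one : G).
Hypotheses (Kinf : infinite_set [set: K]) (tg : is_topgroup mul inv one)
  (bal : balanced mul inv one K).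
Variable S0 : set (set G).
Hypotheses (S0n : forall U, S0 U -> nbhs one U) (S0s : small K S0).

Lemma closure_exists : exists F : set (set G),
  [/\ S0 `<=` F, small K F, (forall U, F U -> nbhs one U) & closedF mul inv F].
Proof.
have [|spl Hspl] := @cchoice _ _ id (fun U => nbhs one U)
  (fun U V => nbhs one V /\ forall a b, V a -> V b -> U (mul a b)).
  by move=> U /(nbhs_one_mul tg) [V nV sV]; exists V.
have [|gam Hgam] := @cchoice _ _ (fun _ => set0) (fun U => nbhs one U)
  (fun U g => [/\ small K g, (forall V, g V -> nbhs one V) &
     forall x, exists2 V, g V & forall v, V v -> U (mul (mul x v) (inv x))]).
  move=> U /bal [g [cg [ng hg]]]; exists g; split => //.
  exact: (card_small setT).
pose ivs (U : set G) := [set a | U (inv a)].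
pose step (A : set (set G)) := A `|` (spl @` A) `|` (ivs @` A) `|`
  (\bigcup_(U in A) gam U) `|` (\bigcup_(U in A) ((fun V => U `&` V) @` A)).
pose fam n := iter n step S0.
have famS n : fam n.+1 = step (fam n) by [].
have nb n U : fam n U -> nbhs one U.
  elim: n U => [|n IH] U; first exact: S0n.
  rewrite famS => -[[[[/IH//|[V /IH nV <-]]|[V /IH nV <-]]|[V /IH nV gVU]]|[V /IH nV [W /IH nW <-]]].
  - by case: (Hspl _ nV).
  - exact: (nbhs_one_inv tg).
  - by case: (Hgam _ nV) => _ + _; apply.
  - exact: filterI.
have sm n : small K (fam n).
  elim: n => [//|n IH]; rewrite famS.
  apply: (small_setU Kinf setT); last first.
    apply: (small_union Kinf setT) => // V _; exact: small_image.
  apply: (small_setU Kinf setT); last first.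
    apply: (small_union Kinf setT) => // V /nb nV; by case: (Hgam _ nV).
  apply: (small_setU Kinf setT); last exact: small_image.
  apply: (small_setU Kinf setT) => //; exact: small_image.
have mono n m : (n <= m)%N -> fam n `<=` fam m.
  move=> /subnK <-; elim: (m - n)%N => [//|k IH] U /IH.
  by rewrite addSn famS => ?; do 4 left.
exists (\bigcup_n fam n); split.
- by move=> U S0U; exists 0%N.
- exact: (small_nat_union Kinf setT).
- by move=> U [n _ /nb].
split.
- move=> U [n _ fU]; exists (spl U); first by exists n.+1 => //; rewrite famS; do 3 left; right; exists U.
  by case: (Hspl _ (nb _ _ fU)).
- move=> U [n _ fU]; exists (ivs U); first by exists n.+1 => //; rewrite famS; do 2 left; right; exists U.
  by [].
- move=> U x [n _ fU]; have [_ _ /(_ x) [V gV sV]] := Hgam _ (nb _ _ fU).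
  by exists V => //; exists n.+1 => //; rewrite famS; left; right; exists U.
- move=> U V [n _ fU] [m _ fV]; exists (maxn n m).+1 => //; rewrite famS; right.
  exists U; first exact: (mono n) (leq_maxl _ _) _ fU.
  by exists V => //; exact: (mono m) (leq_maxr _ _) _ fV.
Qed.

End Closure.


Record qdata := QData {
  qT : choiceType;
  qmul : qT -> qT -> qT; qinv : qT -> qT; qone : qT;
  qmulA : forall a b c, qmul a (qmul b c) = qmul (qmul a b) c;
  qmul1 : forall a, qmul qone a = a /\ qmul a qone = a;
  qmulV : forall a, qmul (qinv a) a = qone /\ qmul a (qinv a) = qone;
  qF : set (set qT);
  qF_ne : exists U, qF U;
  qF_one : forall U, qF U -> U qone;
  qF_cl : closedF qmul qinv qF }.

Lemma xget_indep (T : choiceType) (a b : T) (P : set T) (x : T) : P x -> xget a P = xget b P.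
Proof.
move=> Px; rewrite /xget; case: pselect => // N; exfalso; apply: N; exists x.
by apply/asboolP.
Qed.

Section QuotAlg.
Variable d : qdata.
Local Notation T := (qT d).
Local Notation m := (@qmul d).
Local Notation i := (@qinv d).
Local Notation e := (@qone d).
Local Notation F := (@qF d).
Let mA := @qmulA d.
Let m1 := @qmul1 d.
Let mV := @qmulV d.

Lemma F_mul U : F U -> exists2 V, F V & forall a b, V a -> V b -> U (m a b).
Proof. by case: (@qF_cl d) => + _ _ _; apply. Qed.
Lemma F_inv U : F U -> exists2 V, F V & forall a, V a -> U (i a).
Proof. by case: (@qF_cl d) => _ + _ _; apply. Qed.
Lemma F_conj U x : F U -> exists2 V, F V & forall v, V v -> U (m (m x v) (i x)).
Proof. by case: (@qF_cl d) => _ _ + _; apply. Qed.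
Lemma F_cap U V : F U -> F V -> F (U `&` V).
Proof. by case: (@qF_cl d) => _ _ _; apply. Qed.

Lemma F_mul3 U : F U -> exists2 V, F V & forall a b c, V a -> V b -> V c -> U (m (m a b) c).
Proof.
move=> /F_mul [V1 FV1 s1]; have [V2 FV2 s2] := F_mul FV1.
exists (V1 `&` V2); first exact: F_cap.
by move=> a b c [_ ?] [_ ?] [? _]; apply: s1 => //; apply: s2.
Qed.

Lemma F_mulinv U : F U -> exists2 V, F V & forall a b, V a -> V b -> U (m a (i b)).
Proof.
move=> /F_mul [V1 FV1 s1]; have [V2 FV2 s2] := F_inv FV1.
exists (V1 `&` V2); first exact: F_cap.
by move=> a b [? _] [_ ?]; apply: s1 => //; apply: s2.
Qed.

Lemma F_invmul U : F U -> exists2 V, F V & forall a b, V a -> V b -> U (m (i a) b).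
Proof.
move=> /F_mul [V1 FV1 s1]; have [V2 FV2 s2] := F_inv FV1.
exists (V1 `&` V2); first exact: F_cap.
by move=> a b [_ ?] [? _]; apply: s1 => //; apply: s2.
Qed.

Definition qN x := forall U, F U -> U x.

Lemma qN_one : qN e. Proof. by move=> U /qF_one. Qed.
Lemma qN_mul a b : qN a -> qN b -> qN (m a b).
Proof. by move=> Na Nb U /F_mul [V FV sV]; apply: sV; [apply: Na | apply: Nb]. Qed.
Lemma qN_inv a : qN a -> qN (i a).
Proof. by move=> Na U /F_inv [V FV sV]; apply: sV; apply: Na. Qed.
Lemma qN_conj x a : qN a -> qN (m (m x a) (i x)).
Proof. by move=> Na U /(F_conj x) [V FV sV]; apply: sV; apply: Na. Qed.

Definition qeq a b := qN (m (i a) b).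

Lemma qeq_refl a : qeq a a.
Proof. by rewrite /qeq (g_mulVl mV); exact: qN_one. Qed.
Lemma qeq_sym a b : qeq a b -> qeq b a.
Proof.
by move=> /qN_inv; rewrite /qeq (g_invM mA m1 mV) (g_invK mA m1 mV).
Qed.
Lemma qeq_trans a b c : qeq a b -> qeq b c -> qeq a c.
Proof.
move=> ab bc; have := qN_mul ab bc.
by rewrite /qeq -mA (g_mulKr mA m1 mV).
Qed.

Lemma qeq_mul a a' b b' : qeq a a' -> qeq b b' -> qeq (m a b) (m a' b').
Proof.
move=> aa bb; rewrite /qeq (g_invM mA m1 mV).
have := qN_mul (qN_conj (i b) aa) bb.
rewrite (g_invK mA m1 mV) -!mA (g_mulKr mA m1 mV).
by rewrite !mA.
Qed.

Lemma qeq_inv a a' : qeq a a' -> qeq (i a) (i a').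
Proof.
move=> aa; rewrite /qeq (g_invK mA m1 mV).
have := qN_conj a (qN_inv aa).
by rewrite (g_invM mA m1 mV) (g_invK mA m1 mV) -mA (g_mulKl' mA m1 mV).
Qed.


Lemma qeqN a b : qeq a b -> forall U, F U -> U (m (i a) b).
Proof. by []. Qed.

Lemma ball_resp U : F U -> exists2 V, F V &
  forall x x' y y', qeq x x' -> qeq y y' -> V (m (i x) y) -> U (m (i x') y').
Proof.
move=> /F_mul3 [V FV sV]; exists V => // x x' y y' xx yy Vxy.
have -> : m (i x') y' = m (m (m (i x') x) (m (i x) y)) (m (i y) y').
  by rewrite -!mA (g_mulKr mA m1 mV) (g_mulKr mA m1 mV).
apply: sV => //; last exact: yy.
by apply: (qeq_sym xx).
Qed.

Definition qrep a := xget a (qeq a).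

Lemma qrepP a : qeq a (qrep a).
Proof. by rewrite /qrep; case: xgetP => // N; exfalso; apply: (N a); apply: qeq_refl. Qed.

Lemma qrep_eq a b : qeq a b -> qrep a = qrep b.
Proof.
move=> ab; rewrite /qrep.
have -> : qeq a = qeq b.
  apply/funext => c; apply/propext; split => [/(qeq_trans (qeq_sym ab))//|].
  exact: qeq_trans.
exact: (@xget_indep _ a b _ b (qeq_refl b)).
Qed.

Lemma qrep_idem a : qrep (qrep a) = qrep a.
Proof. by apply: esym; apply: qrep_eq; apply: qrepP. Qed.

End QuotAlg.


Definition qH (d : qdata) := {a : qT d | qrep a = a}.
HB.instance Definition _ d := gen_eqMixin (qH d).
HB.instance Definition _ d := gen_choiceMixin (qH d).

Definition hv d (h : qH d) : qT d := proj1_sig h.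
Definition qpi d (a : qT d) : qH d := exist _ (qrep a) (qrep_idem a).

Definition hrel d (U : set (qT d)) : set (qH d * qH d) :=
  [set p | U (qmul (qinv (hv p.1)) (hv p.2))].

Definition hent d : set_system (qH d * qH d) :=
  [set E | exists2 U, @qF d U & hrel U `<=` E].

Section HUnif.
Variable d : qdata.
Local Notation T := (qT d).
Local Notation m := (@qmul d).
Local Notation i := (@qinv d).
Local Notation e := (@qone d).
Local Notation F := (@qF d).
Let mA := @qmulA d.
Let m1 := @qmul1 d.
Let mV := @qmulV d.

Lemma hent_filter : Filter (@hent d).
Proof.
split.
- by have [U FU] := @qF_ne d; exists U.
- move=> E1 E2 [U1 F1 s1] [U2 F2 s2]; exists (U1 `&` U2); first exact: F_cap.
  by move=> p [? ?]; split; [apply: s1 | apply: s2].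
- by move=> P Q PQ [U FU sU]; exists U => // p /sU /PQ.
Qed.

Local Open Scope relation_scope.

Lemma hent_diag A : @hent d A -> diagonal `<=` A.
Proof.
case=> U FU sU [x y] /= xy; apply: sU; rewrite /hrel /=; rewrite /diagonal /= in xy; rewrite -xy (g_mulVl mV).
exact: qF_one.
Qed.

Lemma hent_inv A : @hent d A -> @hent d A^-1.
Proof.
case=> U FU sU; have [V FV sV] := F_inv FU; exists V => // -[x y] /= Vxy.
apply: sU; rewrite /hrel /=.
by have := sV _ Vxy; rewrite (g_invM mA m1 mV) (g_invK mA m1 mV).
Qed.

Lemma hent_split A : @hent d A -> exists2 B, @hent d B & B \; B `<=` A.
Proof.
case=> U FU sU; have [V FV sV] := F_mul FU; exists (hrel V); first by exists V.
move=> [x z] [y /= Vxy Vyz]; apply: sU; rewrite /hrel /=.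
by have := sV _ _ Vxy Vyz; rewrite -mA (g_mulKr mA m1 mV).
Qed.

End HUnif.

HB.instance Definition _ d := @isUniform.Build (qH d) (@hent d) (hent_filter d)
  (@hent_diag d) (@hent_inv d) (@hent_split d).

Section HTop.
Variable d : qdata.
Local Notation T := (qT d).
Local Notation m := (@qmul d).
Local Notation i := (@qinv d).
Local Notation e := (@qone d).
Local Notation F := (@qF d).
Local Notation H := (qH d).
Let mA := @qmulA d.
Let m1 := @qmul1 d.
Let mV := @qmulV d.

Lemma nbhsH (h : H) (W : set H) :
  nbhs h W <-> exists2 U, F U & forall q, U (m (i (hv h)) (hv q)) -> W q.
Proof.
rewrite -nbhs_entourageE; split.
  case=> E [U FU sU] sE; exists U => // q Uq; apply: sE; apply/xsectionP; exact: sU.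
case=> U FU sU; exists (hrel U); first by exists U.
by move=> q /xsectionP; apply: sU.
Qed.

Lemma hv_pi a : qeq a (hv (@qpi d a)). Proof. exact: qrepP. Qed.

Lemma pi_hv (h : H) : qpi (hv h) = h.
Proof. by case: h => a Ha; apply: eq_exist. Qed.

Lemma qpi_eq a b : qeq a b -> @qpi d a = qpi b.
Proof. by move=> ab; apply: eq_exist; apply: qrep_eq. Qed.

Lemma hv_eq (h1 h2 : H) : qeq (hv h1) (hv h2) -> h1 = h2.
Proof. by move=> E; rewrite -(pi_hv h1) -(pi_hv h2); apply: qpi_eq. Qed.

Definition hmul (h1 h2 : H) : H := qpi (m (hv h1) (hv h2)).
Definition hinv (h : H) : H := qpi (i (hv h)).
Definition hone : H := qpi e.

Lemma hmulA (a b c : H) : hmul a (hmul b c) = hmul (hmul a b) c.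
Proof.
apply: qpi_eq; apply: (qeq_trans (b := m (hv a) (m (hv b) (hv c)))).
  by apply: qeq_mul; [exact: qeq_refl | apply: qeq_sym; exact: hv_pi].
rewrite mA; apply: qeq_mul; [exact: hv_pi | exact: qeq_refl].
Qed.

Lemma hmul1 (a : H) : hmul hone a = a /\ hmul a hone = a.
Proof.
split; rewrite -[RHS]pi_hv; apply: qpi_eq.
  rewrite -{2}(g_mul1l m1 (hv a)); apply: qeq_mul; [apply: qeq_sym; exact: hv_pi | exact: qeq_refl].
rewrite -{2}(g_mul1r m1 (hv a)); apply: qeq_mul; [exact: qeq_refl | apply: qeq_sym; exact: hv_pi].
Qed.

Lemma hmulV (a : H) : hmul (hinv a) a = hone /\ hmul a (hinv a) = hone.
Proof.
split; apply: qpi_eq.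
  rewrite -(g_mulVl mV (hv a)); apply: qeq_mul; [apply: qeq_sym; exact: hv_pi | exact: qeq_refl].
rewrite -(g_mulVr mV (hv a)); apply: qeq_mul; [exact: qeq_refl | apply: qeq_sym; exact: hv_pi].
Qed.

Lemma hmul_cont : continuous (fun p : H * H => hmul p.1 p.2).
Proof.
move=> [p q] W /= /nbhsH [U FU sU].
have [V0 FV0 sV0] := ball_resp FU.
have [V1 FV1 sV1] := F_mul FV0.
have [V2 FV2 sV2] := F_conj (i (hv q)) FV1.
exists ([set p' | V2 (m (i (hv p)) (hv p'))], [set q' | V1 (m (i (hv q)) (hv q'))]).
  by split; apply/nbhsH; [exists V2 | exists V1].
move=> [p' q'] /= [Pp' Qq']; apply: sU.
apply: (sV0 (m (hv p) (hv q)) _ (m (hv p') (hv q'))); [exact: hv_pi | exact: hv_pi |].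
have -> : m (i (m (hv p) (hv q))) (m (hv p') (hv q')) =
  m (m (m (i (hv q)) (m (i (hv p)) (hv p'))) (i (i (hv q)))) (m (i (hv q)) (hv q')).
  by rewrite (g_invM mA m1 mV) (g_invK mA m1 mV) -!mA (g_mulKr mA m1 mV).
by apply: sV1 => //; apply: sV2.
Qed.

Lemma hinv_cont : continuous hinv.
Proof.
move=> p W /nbhsH [U FU sU].
have [V0 FV0 sV0] := ball_resp FU.
have [V2 FV2 sV2] := F_conj (hv p) FV0.
have [V3 FV3 sV3] := F_inv FV2.
apply/nbhsH; exists V3 => // p' V3p'; apply: sU.
apply: (sV0 (i (hv p)) _ (i (hv p'))); [exact: hv_pi | exact: hv_pi |].
have -> : m (i (i (hv p))) (i (hv p')) =
  m (m (hv p) (i (m (i (hv p)) (hv p')))) (i (hv p)).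
  rewrite (g_invM mA m1 mV) !(g_invK mA m1 mV) -!mA (g_mulVr mV).
  by rewrite (g_mul1r m1).
by apply: sV2; apply: sV3.
Qed.

Lemma H_topgroup : is_topgroup hmul hinv hone.
Proof. split; [exact: hmulA | exact: hmul1 | exact: hmulV | exact: hmul_cont | exact: hinv_cont]. Qed.

Lemma H_hausdorff : hausdorff_space H.
Proof.
move=> p q cl; apply: hv_eq => U FU.
have [V FV sV] := F_mulinv FU.
have [w [Pw Qw]] := cl [set w | V (m (i (hv p)) (hv w))] [set w | V (m (i (hv q)) (hv w))]
  (proj2 (nbhsH _ _) (ex_intro2 _ _ V FV (fun _ x => x)))
  (proj2 (nbhsH _ _) (ex_intro2 _ _ V FV (fun _ x => x))).
have := sV _ _ Pw Qw.
by rewrite (g_invM mA m1 mV) (g_invK mA m1 mV) -!mA (g_mulKr mA m1 mV).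
Qed.

Definition hball (h : H) (U : set T) : set H := [set q | U (m (i (hv h)) (hv q))].

Lemma hball_nbhs h U : F U -> nbhs h (hball h U).
Proof. by move=> FU; apply/nbhsH; exists U. Qed.

Lemma H_character (K : Type) : small K F -> character_le H K.
Proof.
move=> sF h; exists ((fun U => interior (hball h U)) @` F); split.
  by apply: small_card; apply: small_image.
split.
  by move=> _ [U FU <-]; split; [exact: open_interior | exact: hball_nbhs].
move=> W /nbhsH [U FU sU]; exists (interior (hball h U)); first by exists U.
by move=> q /interior_subset; apply: sU.
Qed.

Lemma mid1 x y z : m (i x) z = m (m (i x) y) (m (i y) z).
Proof. by rewrite -mA (g_mulKr mA m1 mV). Qed.

Lemma mid2 x y z w : m (i x) w = m (m (m (i x) y) (m (i y) z)) (m (i z) w).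
Proof. by rewrite -(mid1 x y z) -(mid1 x z w). Qed.

Lemma H_weight (K : Type) : infinite_set [set: K] -> small K F ->
  (forall U, F U -> exists A, small K A /\
     forall g, exists a u, A a /\ U u /\ g = m a u) ->
  weight_le H K.
Proof.
move=> Kinf sF nar.
have [|Af HAf] := @cchoice _ _ (fun _ => set0) F
  (fun U A => small K A /\ forall g, exists a u, A a /\ U u /\ g = m a u).
  exact: nar.
pose base := \bigcup_(U in F) \bigcup_(V in F)
  ((fun a => interior (hball (qpi a) U)) @` Af V).
exists base; split.
  apply: small_card; apply: (small_union Kinf setT) => // U _.
  apply: (small_union Kinf setT) => // V FV.
  by apply: small_image; case: (HAf _ FV).
split; first by move=> _ [U _ [V _ [a _ <-]]]; exact: open_interior.
move=> W h oW Wh.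
have : nbhs h W by rewrite openE in oW; exact: oW.
case/nbhsH => U FU sU.
have [V1 FV1 s1] := F_mul3 FU.
have [V2 FV2 s2] := F_inv FV1.
have [V4 FV4 s4] := F_mul3 FV1.
have FVn := F_cap FV2 FV4.
have [_ /(_ (hv h)) [a [u [Aa [[V2u V4u] ca]]]]] := HAf _ FVn.
exists (interior (hball (qpi a) V1)).
  by exists V1 => //; exists (V2 `&` V4) => //; exists a.
split.
  apply/nbhsH; exists V4 => // q V4q /=.
  rewrite /hball /= (mid2 _ a (hv h)); apply: s4 => //.
  - exact: (qeq_sym (hv_pi a)) _ FV4.
  - by rewrite ca (g_mulKl mA m1 mV).
move=> q /interior_subset /= V1q; apply: sU.
rewrite (mid2 _ a (hv (qpi a))); apply: s1 => //.
- by rewrite ca (g_invM mA m1 mV) -mA (g_mulVl mV) (g_mul1r m1); exact: s2.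
- exact: (hv_pi a) _ FV1.
Qed.

End HTop.


Lemma unif_tych (T : uniformType) : hausdorff_space T -> tychonoff_space T.
Proof.
move=> hT; split => // B x clB nBx.
have := @uniform_completely_regular Rdefinitions.R T x B clB nBx.
move/(uniform_separatorP (R := Rdefinitions.R)) => [f [cf _ f0 f1]].
exists f; split => //; split.
  have h0 : [set f z | z in [set x]] (f x) by exists x.
  by move/f0: h0 => /= ->.
move=> y By.
have h1 : [set f z | z in B] (f y) by exists y.
by move/f1: h1 => /= ->.
Qed.


Lemma narrow_balanced (K : Type) (G : topologicalType) (mul : G -> G -> G) (inv : G -> G) (one : G) :
  is_topgroup mul inv one -> narrow mul one K -> balanced mul inv one K.
Proof.
move=> tg nar; have tg' := tg; case: tg' => mA m1 mV _ _.
move=> U /(nbhs_one_mul3 tg) [V nV sV].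
pose Vs := V `&` [set a | V (inv a)].
have nVs : nbhs one Vs by apply: filterI; [exact: nV | exact: (nbhs_one_inv tg nV)].
have nVi : nbhs one [set a | Vs (inv a)] by exact: (nbhs_one_inv tg nVs).
have [A [cA HA]] := nar _ nVi.
exists ((fun a => [set w | V (mul (mul (inv a) w) (inv (inv a)))]) @` A); split.
  exact: card_le_trans (card_image_le _ _) cA.
split; first by move=> _ [a _ <-]; exact: (nbhs_conj tg).
move=> x; have [a [u [Aa [[Vu1 Vu2] ix]]]] := HA (inv x).
exists [set w | V (mul (mul (inv a) w) (inv (inv a)))]; first by exists a.
move=> w Vw.
have -> : x = mul (inv u) (inv a) by rewrite -(g_invK mA m1 mV x) ix (g_invM mA m1 mV).
have -> : mul (mul (mul (inv u) (inv a)) w) (inv (mul (inv u) (inv a))) =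
  mul (mul (inv u) (mul (mul (inv a) w) (inv (inv a)))) u.
  by rewrite (g_invM mA m1 mV) !(g_invK mA m1 mV) -!mA.
by apply: sV => //; move: Vu2; rewrite /= (g_invK mA m1 mV).
Qed.

Section Core.
Variables (K : Type) (G X : topologicalType) (mul : G -> G -> G) (inv : G -> G) (one : G)
  (alpha : G -> X -> X).
Hypotheses (Kinf : infinite_set [set: K]) (tg : is_topgroup mul inv one)
  (act : is_continuous_action mul one alpha) (tr : transitive_action alpha).
Variable F : set (set G).
Hypotheses (sF : small K F) (nF : forall U, F U -> nbhs one U) (neF : exists U, F U)
  (cF : closedF mul inv F)
  (P1 : forall n, (forall U, F U -> U n) -> forall x, alpha n x = x)
  (P2 : forall g x O, nbhs (alpha g x) O -> exists2 U, F U &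
     exists V, nbhs x V /\ forall u x', U u -> V x' -> O (alpha (mul g u) x')).

Let mA : forall a b c, mul a (mul b c) = mul (mul a b) c. Proof. by case: tg. Qed.
Let m1 : forall a, mul one a = a /\ mul a one = a. Proof. by case: tg. Qed.
Let mV : forall a, mul (inv a) a = one /\ mul a (inv a) = one. Proof. by case: tg. Qed.
Let Fone : forall U, F U -> U one. Proof. by move=> U /nF /nbhs_singleton. Qed.

Definition dG : qdata := @QData G mul inv one mA m1 mV F neF Fone cF.

Definition beta (h : qH dG) (x : X) : X := alpha (hv h) x.

Let actM g h x : alpha (mul g h) x = alpha g (alpha h x).
Proof. by case: act => _ _; apply. Qed.

Lemma alpha_qeq a b x : qeq (d := dG) a b -> alpha a x = alpha b x.
Proof.
move=> ab; rewrite -[b](g_mulKr mA m1 mV a) actM; congr (alpha a _).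
by rewrite P1.
Qed.

Lemma beta_act : is_continuous_action (@hmul dG) (@hone dG) beta /\ transitive_action beta.
Proof.
split; last first.
  move=> x y; have [g gxy] := tr x y; exists (qpi (d := dG) g).
  by rewrite /beta -gxy; apply/esym/alpha_qeq; exact: hv_pi.
split.
- move=> [h x] O /= nO; have [U FU [V [nV sV]]] := P2 nO.
  exists (hball h U, V); first by split => //; exact: hball_nbhs.
  move=> [h' x'] /= [Uh' Vx']; rewrite /beta.
  by have := sV _ _ Uh' Vx'; rewrite (g_mulKr mA m1 mV).
- move=> x; rewrite /beta /hone.
  rewrite -(alpha_qeq x (hv_pi (d := dG) one)).
  by case: act => _ + _; apply.
- move=> g h x; rewrite /beta /hmul -(alpha_qeq x (hv_pi (d := dG) _)) actM.
  by [].
Qed.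

Lemma core_char : acts_transitively_via X (fun H _ _ _ => character_le H K).
Proof.
exists (qH dG), (@hmul dG), (@hinv dG), (@hone dG), beta.
have [ca ta] := beta_act; split => //.
- exact: unif_tych (@H_hausdorff dG).
- exact: H_topgroup.
- exact: H_character.
Qed.

Lemma core_weight : narrow mul one K -> acts_transitively_via X (fun H _ _ _ => weight_le H K).
Proof.
move=> nar; exists (qH dG), (@hmul dG), (@hinv dG), (@hone dG), beta.
have [ca ta] := beta_act; split => //.
- exact: unif_tych (@H_hausdorff dG).
- exact: H_topgroup.
- apply: H_weight => // U FU; have [A [cA HA]] := nar _ (nF FU).
  by exists A; split => //; exact: (card_small one).
Qed.

End Core.

Lemma act1 (G X : topologicalType) (mul : G -> G -> G) (one : G) (alpha : G -> X -> X) g z O :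
  is_continuous_action mul one alpha ->
  nbhs (alpha g z) O -> nbhs z [set z' | O (alpha g z')].
Proof.
case=> cact _ _ nO; have := cont_nbhs (x := (g, z)) cact nO.
case/nbhs_pair => A [B [nA nB sub]].
by apply: filterS nB => z' Bz'; apply: (sub g z') => //; apply: nbhs_singleton.
Qed.

Lemma main_F (K : Type) (G X : topologicalType) (mul : G -> G -> G) (inv : G -> G) (one : G)
  (alpha : G -> X -> X) :
  infinite_set [set: K] -> tychonoff_space X -> is_topgroup mul inv one ->
  is_continuous_action mul one alpha -> transitive_action alpha ->
  character_le X K -> balanced mul inv one K ->
  exists F : set (set G), [/\ small K F, (forall U, F U -> nbhs one U), (exists U, F U),
    closedF mul inv F &
    ((forall n, (forall U, F U -> U n) -> forall x, alpha n x = x) /\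
     (forall g x O, nbhs (alpha g x) O -> exists2 U, F U &
       exists V, nbhs x V /\ forall u x', U u -> V x' -> O (alpha (mul g u) x')))].
Proof.
move=> Kinf tyX tg act tr chX bal.
have tg' := tg; case: tg' => mA m1 mV _ _.
have act' := act; case: act' => cact a1 aM.
case: (pselect (exists x : X, True)) => [[x0 _]|noX]; last first.
  have S0n : forall U, [set setT] U -> nbhs one U by move=> U ->; exact: filterT.
  have [F [S0F sF nF cF]] := closure_exists Kinf tg bal S0n (small_set1 Kinf setT).
  exists F; split => //; first by exists setT; apply: S0F.
  by split => [n _ x|g x]; exfalso; apply: noX; exists x.
have [Bx [cB [oB lB]]] := chX x0.
have [|WC HWC] := @cchoice _ _ (fun _ => (setT, setT)) Bx
  (fun b (p : set G * set X) => [/\ nbhs one p.1, nbhs x0 p.2 &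
     forall g x, p.1 g -> p.2 x -> b (alpha g x)]).
  move=> b Bb; have nb : nbhs (alpha one x0) b.
    by rewrite a1; apply: open_nbhs_nbhs; exact: oB.
  have := cont_nbhs (x := (one, x0)) cact nb.
  by case/nbhs_pair => A [B [nA nB sub]]; exists (A, B).
pose S0 := (fun b => (WC b).1) @` Bx.
have S0n U : S0 U -> nbhs one U by case=> b Bb <-; case: (HWC _ Bb).
have S0s : small K S0 by apply: small_image; exact: (card_small setT).
have [F [S0F sF nF cF]] := closure_exists Kinf tg bal S0n S0s.
have [_ _ Fconj _] := cF.
have Nconj n k : (forall U, F U -> U n) -> forall U, F U -> U (mul (mul (inv k) n) k).
  move=> Nn U FU; have [V FV sV] := Fconj U (inv k) FU.
  by have := sV _ (Nn _ FV); rewrite (g_invK mA m1 mV).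
have stab0 n : (forall U, F U -> U n) -> alpha n x0 = x0.
  move=> Nn; apply/esym; apply: (proj1 tyX) => A B nA nB.
  exists (alpha n x0); split; last exact: nbhs_singleton.
  have [b Bb bA] := lB _ nA; apply: bA.
  have [_ nC sWC] := HWC _ Bb; apply: sWC; last exact: nbhs_singleton.
  by apply: Nn; apply: S0F; exists b.
exists F; split => //.
  have [b Bb _] := lB _ (@filterT _ _ _ : nbhs x0 setT).
  by exists (WC b).1; apply: S0F; exists b.
split.
  move=> n Nn x; have [k <-] := tr x0 x.
  rewrite -aM (_ : mul n k = mul k (mul (mul (inv k) n) k)); last first.
    by rewrite -!mA (g_mulKr mA m1 mV).
  by rewrite aM stab0 //; exact: Nconj.
move=> g x O nO; have [k kx] := tr x0 x; subst x.
have nO1 := act1 act nO.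
have nO2 : nbhs x0 [set z | O (alpha g (alpha k z))] by exact: (act1 act nO1).
have [b Bb bO] := lB _ nO2.
have [nW nC sWC] := HWC _ Bb.
have FW : F (WC b).1 by apply: S0F; exists b.
have [V FV sV] := Fconj _ (inv k) FW.
exists V => //; exists [set z | (WC b).2 (alpha (inv k) z)]; split.
  apply: (act1 act); rewrite -aM (g_mulVl mV) a1; exact: nC.
move=> u x' Vu Cx'.
have := bO _ (sWC _ _ (sV _ Vu) Cx'); rewrite /= -!aM.
by rewrite (g_invK mA m1 mV) -!mA (g_mulVr mV) (g_mul1r m1) (g_mulKr mA m1 mV).
Qed.

Theorem corollary3p5 (K : Type) (G X : topologicalType)
    (mul : G -> G -> G) (inv : G -> G) (one : G) (alpha : G -> X -> X) :
  infinite_set [set: K] ->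
  tychonoff_space G -> tychonoff_space X ->
  is_topgroup mul inv one ->
  is_continuous_action mul one alpha ->
  transitive_action alpha ->
  character_le X K ->
  (narrow mul one K ->
     acts_transitively_via X (fun H _ _ _ => weight_le H K)) /\
  (balanced mul inv one K ->
     acts_transitively_via X (fun H _ _ _ => character_le H K)).
Proof.
move=> Kinf tyG tyX tg act tr chX; split => [nar|bal].
  have bal := narrow_balanced tg nar.
  have [F [sF nF neF cF [P1 P2]]] := main_F Kinf tyX tg act tr chX bal.
  exact: (core_weight Kinf tg act tr sF nF neF cF P1 P2).
have [F [sF nF neF cF [P1 P2]]] := main_F Kinf tyX tg act tr chX bal.
exact: (core_char tg act tr sF nF neF cF P1 P2).
Qed.
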